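(* Let $\mathcal X$ be a Polish space with Borel probability measure $\rho$, $a<b$ reals, $T\ge1$, and $\mathcal C\subseteq[a,b]^T$ nonempty compact. Let $\ell:[a,b]\times[a,b]\to\mathbb R$ be SELF with $\ell(y,y')=\langle\psi(y),V\psi(y')\rangle_{\mathcal H}$ and continuous. Let $g_1,\dots,g_T:\mathcal X\to\mathcal H$ be measurable with $\|g_t(x)\|_{\mathcal H}$ bounded almost everywhere, and set $$r(x,c)=\frac1T\sum_{t=1}^T\langle\psi(c_t),Vg_t(x)\rangle_{\mathcal H},\qquad\bar{\mathcal E}(f)=\int_{\mathcal X}r(x,f(x))\,d\rho(x).$$ Then there exist a measurable $f^\circ:\mathcal X\to\mathcal C$ with $f^\circ(x)\in\operatorname*{argmin}_{c\in\mathcal C}r(x,c)$ and a measurable function $m$ with $m(x)=\min_{c\in\mathcal C}r(x,c)$ almost everywhere, such that $$\bar{\mathcal E}(f^\circ)=\int_{\mathcal X}m(x)\,d\rho(x)=\inf_{f:\mathcal X\to\mathcal C}\bar{\mathcal E}(f),$$ the infimum being over measurable $f$.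
   Context: Definition (SELF): Let $\mathcal{Y}$ be a compact set. A function $\ell:\mathcal{Y}\times\mathcal{Y}\to\mathbb{R}$ is a Structure Encoding Loss Function (SELF) if there exist a continuous feature map $\psi:\mathcal{Y}\to\mathcal{H}$, with $\mathcal{H}$ a reproducing kernel Hilbert space on $\mathcal{Y}$, and a continuous linear operator $V:\mathcal{H}\to\mathcal{H}$ such that $\ell(y,y')=\langle\psi(y),V\psi(y')\rangle_{\mathcal H}$ for all $y,y'\in\mathcal{Y}$. For $c\in\mathbb R^T$, $c_t$ is its $t$-th coordinate. *)

(* Defs.v *)
From HB Require Import structures.
From mathcomp Require Import all_boot all_order all_algebra.
From mathcomp Require Import all_classical all_reals all_analysis.
Set Implicit Arguments. Unset Strict Implicit. Unset Printing Implicit Defensive.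
Import Order.TTheory GRing.Theory Num.Theory.
Import numFieldNormedType.Exports.
Local Open Scope classical_set_scope.
Local Open Scope ring_scope.

Section Defs.
Context {R : realType}.

Definition metric_for (X : topologicalType) (d : X -> X -> R) : Prop :=
  [/\ (forall x y, 0 <= d x y),
      (forall x y, d x y = 0 <-> x = y),
      (forall x y, d x y = d y x),
      (forall x y z, d x z <= d x y + d y z) &
      (forall A : set X, open A <->
         (forall x, A x -> exists2 e : R, 0 < e & forall y, d x y < e -> A y))].

Definition complete_metric (X : topologicalType) (d : X -> X -> R) : Prop :=
  forall u : nat -> X,
    (forall e : R, 0 < e -> exists N : nat, forall m n : nat,
        (N <= m)%N -> (N <= n)%N -> d (u m) (u n) < e) ->
    exists l : X, u @ \oo --> l.

Definition separable_space (X : topologicalType) : Prop :=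
  exists D : set X, countable D /\ closure D = setT.

Definition polish (X : topologicalType) : Prop :=
  separable_space X /\
  exists d : X -> X -> R, metric_for d /\ complete_metric d.

(* ip is an inner product on H inducing the norm of H (so that a complete
   normed space H with such an ip is a real Hilbert space) *)
Definition inner_product_of (H : normedModType R) (ip : H -> H -> R) : Prop :=
  [/\ (forall x y, ip x y = ip y x),
      (forall (a : R) x y z, ip (a *: x + y) z = a * ip x z + ip y z) &
      (forall x, ip x x = `|x| ^+ 2)].

(* H (with inner product ip) is a reproducing kernel Hilbert space on Y:
   via the injective linear map ev, elements of H are functions on Y,
   and point evaluations are continuous (bounded) linear functionals. *)
Definition rkhs_on (Y : set R) (H : completeNormedModType R)
  (ip : H -> H -> R) (ev : H -> R -> R) : Prop :=
  [/\ inner_product_of ip,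
      (forall (a : R) h k y, ev (a *: h + k) y = a * ev h y + ev k y),
      (forall h, (forall y, Y y -> ev h y = 0) -> h = 0) &
      (forall y, Y y -> exists M : R, forall h, `|ev h y| <= M * `|h|)].

Definition SELF (Y : set R) (l : R -> R -> R) (H : completeNormedModType R)
  (ip : H -> H -> R) (ev : H -> R -> R) (psi : R -> H) (V : {linear H -> H})
  : Prop :=
  [/\ rkhs_on Y ip ev, {within Y, continuous psi}, continuous V &
      (forall y y', Y y -> Y y' -> l y y' = ip (psi y) (V (psi y')))].

Definition borel_measurable d (T : measurableType d) (Y : topologicalType)
  (f : T -> Y) : Prop :=
  forall O : set Y, open O -> measurable (f @^-1` O).

Definition rfun (T : nat) (H : completeNormedModType R) (ip : H -> H -> R)
  (psi : R -> H) (V : {linear H -> H}) (X : Type) (g : 'I_T -> X -> H)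
  (x : X) (c : 'rV[R]_T) : R :=
  T%:R^-1 * \sum_(t < T) ip (psi (c ord0 t)) (V (g t x)).

Definition Ebar d (X : measurableType d) (rho : {measure set X -> \bar R})
  (T : nat) (H : completeNormedModType R) (ip : H -> H -> R)
  (psi : R -> H) (V : {linear H -> H}) (g : 'I_T -> X -> H)
  (f : X -> 'rV[R]_T) : \bar R :=
  (\int[rho]_x (rfun ip psi V g x (f x))%:E)%E.

End Defs.

Notation borel_type X := (g_sigma_algebraType (@open X)).

(* Main.v *)
Require Import Defs.
From HB Require Import structures.
From mathcomp Require Import all_boot all_order all_algebra.
From mathcomp Require Import all_classical all_reals all_analysis.
From mathcomp Require Import ring lra.
From mathcomp Require Import measurable_realfun.
Import Order.TTheory GRing.Theory Num.Theory.
Import numFieldNormedType.Exports.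
Local Open Scope classical_set_scope.
Local Open Scope ring_scope.
Lemma le_integral_any d (T : measurableType d) (R : realType)
  (mu : {measure set T -> \bar R}) (f g : T -> \bar R) :
  (forall x, (f x <= g x)%E) -> (\int[mu]_x f x <= \int[mu]_x g x)%E.
Proof.
move=> fg; rewrite /integral !patch_setT; apply: leeB.
  apply: ereal_sup_le => _ [h /= hf <-]; exists h => //= x.
  apply: (le_trans (hf x)); rewrite !funeposE; apply: le_max2 => //; exact: fg.
apply: ereal_sup_le => _ [h /= hf <-]; exists h => //= x.
apply: (le_trans (hf x)); rewrite !funenegE; apply: le_max2 => //; rewrite leeN2; exact: fg.
Qed.
Section IP.
Context {R : realType} {H : normedModType R} (ip : H -> H -> R).
Hypothesis hip : [/\ (forall x y, ip x y = ip y x),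
      (forall (a : R) x y z, ip (a *: x + y) z = a * ip x z + ip y z) &
      (forall x, ip x x = `|x| ^+ 2)].

Lemma ip_polar u h : ip u h = (`|u + h| ^+ 2 - `|u| ^+ 2 - `|h| ^+ 2) / 2.
Proof.
case: hip => sym lin nrm.
have addl x y z : ip (x + y) z = ip x z + ip y z.
  by have := lin 1 x y z; rewrite scale1r mul1r.
rewrite -!nrm addl (sym u (u + h)) (sym h (u + h)) !addl (sym h u).
by field.
Qed.

Lemma ip_cont u : continuous (ip u).
Proof.
have -> : ip u = (fun h => (`|u + h| ^+ 2 - `|u| ^+ 2 - `|h| ^+ 2) / 2).
  by apply: funext => h; rewrite ip_polar.
move=> h.
apply: cvgM; last exact: cvg_cst.
apply: cvgB; last first.
  rewrite expr2; apply: cvgM; exact: cvg_norm.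
apply: cvgB; last exact: cvg_cst.
rewrite expr2; apply: cvgM; apply: cvg_norm; apply: cvgD => //; exact: cvg_cst.
Qed.

Lemma ip_contr u : continuous (ip ^~ u).
Proof.
have -> : ip ^~ u = ip u by apply: funext => h; case: hip => sym _ _; rewrite sym.
exact: ip_cont.
Qed.
End IP.
Definition clamp {R : realType} (a b y : R) := Num.max a (Num.min y b).

Lemma clamp_in {R : realType} (a b y : R) : a <= b -> clamp a b y \in `[a, b].
Proof.
move=> ab; rewrite /clamp in_itv /= le_max lexx /= ge_max ab /=.
by rewrite ge_min lexx orbT.
Qed.

Lemma clamp_id {R : realType} (a b y : R) : y \in `[a, b] -> clamp a b y = y.
Proof.
rewrite in_itv /= => /andP[ay yb]; rewrite /clamp.
by rewrite (min_l yb) (max_r ay).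
Qed.

Lemma clamp_cont {R : realType} (a b : R) : continuous (clamp a b).
Proof.
move=> y.
apply: (@continuous_max R R (fun=> a) (fun y => Num.min y b)); first exact: cvg_cst.
apply: (@continuous_min R R id (fun=> b)); [exact: cvg_id | exact: cvg_cst].
Qed.

Lemma comp_within_cont {R : realType} {U : topologicalType} (A : set R)
  (f : R -> U) (h : R -> R) :
  {within A, continuous f} -> continuous h -> (forall z, A (h z)) ->
  continuous (f \o h).
Proof.
move=> cf ch hA y.
move/subspace_continuousP: cf => /(_ (h y) (hA y)) cfw.
apply: (@cvg_comp _ _ _ h f _ (within A (nbhs (h y)))) => //.
move=> P /= nP; rewrite /within /= in nP.
have hP : nbhs y (h @^-1` [set t | A t -> P t]) := ch y _ nP.
by apply: (filterS _ hP) => z /= /(_ (hA z)).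
Qed.
Lemma mlt d (X : measurableType d) {R : realType} (f : X -> R) (r : R) :
  measurable_fun setT f -> measurable [set x | f x < r].
Proof.
move=> mf; have := mf measurableT _ (measurable_itv `]-oo, r[).
rewrite setTI; congr measurable; apply/seteqP; split => x /=;
  by rewrite in_itv.
Qed.

Lemma mfun_le d (X : measurableType d) {R : realType} (f : X -> R) :
  (forall a, measurable [set x | f x <= a]) -> measurable_fun setT f.
Proof.
move=> hf; apply: (measurability _ (measurable_realfun.RGenInftyO.measurableE R)) => _ [_ [a ->] <-].
rewrite setTI.
rewrite (_ : _ @^-1` _ = \bigcup_k [set x | f x <= a - k.+1%:R^-1]).
  by apply: bigcupT_measurable => k; exact: hf.
apply/seteqP; split => x /=.
  rewrite in_itv /= => fa.
  have [k hk] := ltr_add_invr fa; exists k => //=; move: hk; generalize (k.+1%:R^-1 : R) => t; lra.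
move=> [k _ /= hk]; rewrite in_itv /=.
have : 0 < k.+1%:R^-1 :> R by rewrite invr_gt0.
move: hk; generalize (k.+1%:R^-1 : R) => t; lra.
Qed.

Lemma lt_help1 {R : realType} {a b t : R} : - t < a - b -> a <= 0 -> b < t.
Proof. lra. Qed.
Lemma lt_help3 {R : realType} {a b t : R} : t < a -> b < t -> a <= b -> False.
Proof. lra. Qed.

Section KL.
Context d (X : measurableType d) {R : realType} (T : nat) (C : set 'rV[R]_T).
Hypotheses (cC : compact C) (C0 : C !=set0).
Variable D : nat -> 'rV[R]_T.
Hypotheses (DC : forall n, C (D n))
  (Ddense : forall c, C c -> forall e, 0 < e -> exists n, ball c e (D n)).

Lemma KL (H : X -> 'rV[R]_T -> R) :
  (forall x, continuous (H x)) -> (forall c, measurable_fun setT (H ^~ c)) ->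
  measurable [set x | exists c, C c /\ H x c <= 0].
Proof.
move=> cH mH.
rewrite (_ : [set x | _] = \bigcap_j \bigcup_n [set x | H x (D n) < j.+1%:R^-1]).
  apply: bigcapT_measurable => j; apply: bigcupT_measurable => n.
  exact: mlt.
apply/seteqP; split => x /=.
  move=> [c [Cc Hc]] j _.
  have j0 : 0 < j.+1%:R^-1 :> R by rewrite invr_gt0.
  have := cvg_ball (cH x c) j0.
  move=> hnb; have [del del0 hdel] := (nbhs_ballP _ _).1 (hnb (nbhs_filter c)).
  have [n hn] := Ddense _ Cc _ del0.
  exists n => //=.
  have := hdel _ hn; rewrite /ball /=.
  rewrite ltr_norml => /andP[h1 h2].
  have := lt_help1 h1 Hc; exact.
move=> hx; apply: contrapT => hnot.
have cHx : {within C, continuous (H x)} by apply: continuous_subspaceT.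
have [cs csC csmin] := EVT_min_rV C0 cC cHx.
rewrite inE in csC.
have cs0 : 0 < H x cs.
  rewrite ltNge; apply/negP => hle; apply: hnot; exists cs; split => //.
have [k hk] := ltr_add_invr cs0; rewrite add0r in hk.
have [n _ /= hn] := hx k I.
have := csmin (D n); rewrite inE => /(_ (DC n)) => h.
exact: (lt_help3 hk hn h).
Qed.
End KL.
Lemma rat_approx {R : realType} {m n} (c : 'M[R]_(m, n)) (e : R) : 0 < e ->
  exists q : 'M[rat]_(m, n), ball c e (map_mx ratr q).
Proof.
move=> e0.
have H i j : {q : rat | ratr q \in `](c i j - e), (c i j + e)[}.
  apply: cid; apply: rat_in_itvoo; lra.
exists (\matrix_(i, j) sval (H i j)); split => // i j.
rewrite !mxE; case: (H i j) => q /=; rewrite in_itv /= => /andP[h1 h2].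
rewrite /ball /=; rewrite ltr_norml; apply/andP; split; lra.
Qed.

Lemma dense_seq {R : realType} T (C : set 'rV[R]_T) : C !=set0 ->
  exists D : nat -> 'rV[R]_T, (forall n, C (D n)) /\
    forall c, C c -> forall e, 0 < e -> exists n, ball c e (D n).
Proof.
move=> [c0 Cc0].
pose f (p : 'rV[rat]_T * nat) : 'rV[R]_T :=
  if pselect (exists c, C c /\ ball (map_mx (@ratr R) p.1 : 'rV[R]_T) (p.2.+1%:R^-1) c)
  is left h then projT1 (cid h) else c0.
have fC p : C (f p).
  rewrite /f; case: pselect => // h; by case: (cid h) => c [].
pose D n := if @unpickle ('rV[rat]_T * nat)%type n is Some p then f p else c0.
exists D; split.
  by move=> n; rewrite /D; case: unpickle.
move=> c Cc e e0.
have e20 : 0 < e / 2 by lra.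
have [k hk] := ltr_add_invr e20; rewrite add0r in hk.
have k0 : 0 < k.+1%:R^-1 :> R by rewrite invr_gt0.
have [q hq] := rat_approx c _ k0.
exists (pickle (q, k)); rewrite /D pickleK /f /=.
case: pselect => [h|]; last first.
  by case; exists c; split => //; exact: ball_sym.
case: (cid h) => c' [Cc' bc'] /=.
apply: (@le_ball _ _ _ (k.+1%:R^-1 + k.+1%:R^-1)).
  by rewrite [leRHS](splitr e) lerD // ltW.
apply: (ball_triangle hq); exact: bc'.
Qed.

Section SL.
Context d (X : measurableType d) {R : realType} (T : nat) (C : set 'rV[R]_T).
Hypotheses (cC : compact C) (C0 : C !=set0).
Variable F : X -> 'rV[R]_T -> R.
Hypotheses (cF : forall x, continuous (F x))
  (mF : forall c, measurable_fun setT (F ^~ c)).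

Lemma SL : exists (fo : X -> 'rV[R]_T) (m : X -> R),
  [/\ forall i, measurable_fun setT (fun x => fo x ord0 i),
      measurable_fun setT m &
      forall x, [/\ C (fo x), F x (fo x) = m x & forall c, C c -> m x <= F x c]].
Proof.
have [D [DC Dd]] := @dense_seq R T C C0.
have KL' := @KL d X R T C cC C0 D DC Dd.
have hmin x : {c | C c /\ forall c', C c' -> F x c <= F x c'}.
  apply: cid.
  have cFx : {within C, continuous (F x)} by apply: continuous_subspaceT.
  have [c cC' cmin] := EVT_min_rV C0 cC cFx.
  exists c; rewrite inE in cC'; split => // c' Cc'; apply: cmin; by rewrite inE.
pose m x := F x (sval (hmin x)).
have mm x c : C c -> m x <= F x c.
  by move=> Cc; rewrite /m; case: (hmin x) => c0 [_ h] /=; exact: h.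
have mC x : exists2 c, C c & F x c = m x.
  by rewrite /m; case: (hmin x) => c0 [h _] /=; exists c0.
have mmeas : measurable_fun setT m.
  apply: mfun_le => a.
  rewrite (_ : [set x | m x <= a] = [set x | exists c, C c /\ F x c - a <= 0]).
    apply: KL'.
      move=> x c; apply: continuousB; [exact: cF | exact: cst_continuous].
    move=> c; apply: measurable_funB => //; exact: measurable_cst.
  apply/seteqP; split => x /=.
    move=> ma; have [c Cc Fc] := mC x; exists c; split => //; by rewrite subr_le0 Fc.
  by move=> [c [Cc]]; rewrite subr_le0; apply: le_trans; exact: mm.
have step : forall k, (k <= T)%N -> exists (s : nat -> X -> R)
    (G : X -> 'rV[R]_T -> R),
  [/\ (forall i, measurable_fun setT (s i)),
      (forall x, continuous (G x)),
      (forall c, measurable_fun setT (G ^~ c)),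
      (forall x c, C c -> 0 <= G x c) &
      ((forall x c, C c -> G x c <= 0 ->
        F x c <= m x /\ forall i : 'I_T, (i < k)%N -> c ord0 i = s i x) /\
      (forall x, exists c, C c /\ G x c <= 0))].
  elim=> [_|k IH kT].
    exists (fun _ _ => 0), (fun x c => F x c - m x); split; last split.
    - move=> i; exact: measurable_cst.
    - move=> x c; apply: continuousB; [exact: cF | exact: cst_continuous].
    - move=> c; apply: measurable_funB; [exact: mF | exact: mmeas].
    - move=> x c Cc; rewrite subr_ge0; exact: mm.
    - move=> x c Cc; rewrite subr_le0 => h; split => // i; by rewrite ltn0.
    - move=> x; have [c Cc Fc] := mC x; exists c; split => //; by rewrite Fc subrr.
  have [s [G [ms cG mG G0 [Gz Gne]]]] := IH (ltnW kT).
  pose ik : 'I_T := Ordinal kT.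
  have hz x : {c : 'rV[R]_T | (C c /\ G x c <= 0) /\ forall c', C c' -> G x c' <= 0 -> c ord0 ik <= c' ord0 ik}.
    apply: cid.
    pose Z := C `&` [set c | G x c <= 0].
    have cZ : compact Z.
      apply: compact_closedI => //.
      by have := proj1 (continuous_closedP (G x)) (cG x) _ (@closed_le R 0).
    have Z0 : Z !=set0 by have [c [Cc Gc]] := Gne x; exists c.
    have cc : {within Z, continuous (fun c : 'rV[R]_T => c ord0 ik)}.
      by apply: continuous_subspaceT; exact: coord_continuous.
    have [c cZ' cmin] := EVT_min_rV Z0 cZ cc.
    rewrite inE in cZ'; exists c; split => // c' Cc' Gc'; apply: cmin.
    by rewrite inE.
  pose cx x := sval (hz x).
  pose s' i := if i == k then (fun x => cx x ord0 ik) else s i.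
  have ms'k : measurable_fun setT (fun x => cx x ord0 ik).
    apply: mfun_le => al.
    rewrite (_ : [set x | _ <= al] = [set x | exists c, C c /\ Num.max (c ord0 ik - al) (G x c) <= 0]).
      apply: KL'.
        move=> x c.
        have h1 : {for c, continuous (fun c : 'rV[R]_T => c ord0 ik - al)}.
          apply: continuousB; [exact: coord_continuous | exact: cst_continuous].
        have := continuous_max h1 (cG x c); exact.
      move=> c; apply: measurable_maxr; [exact: measurable_cst | exact: mG].
    apply/seteqP; split => x /=.
      rewrite /cx; case: (hz x) => c [[Cc Gc] _] /= cal; exists c; split => //.
      by rewrite ge_max subr_le0 cal Gc.
    move=> [c [Cc]]; rewrite ge_max subr_le0 => /andP[cal Gc].
    rewrite /cx; case: (hz x) => c' [_ hmin'] /=.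
    exact: le_trans (hmin' c Cc Gc) cal.
  exists s', (fun x c => G x c + `|c ord0 ik - s' k x|); split; last split.
  - move=> i; rewrite /s'; case: eqP => _ //; exact: ms.
  - move=> x c.
    have h2 : {for c, continuous (fun c : 'rV[R]_T => `|c ord0 ik - s' k x|)}.
      move: (s' k x) => z.
      apply: cvg_norm; first exact: nbhs_filter.
      apply: continuousB; [exact: coord_continuous | exact: cst_continuous].
    have := continuousD (cG x c) h2; exact.
  - move=> c; apply: measurable_funD; first exact: mG.
    have h4 : measurable_fun setT (fun x => c ord0 ik - s' k x).
      apply: measurable_funB; first exact: measurable_cst.
      rewrite /s' eqxx; exact: ms'k.
    have := measurableT_comp (@normr_measurable R setT) h4; exact.
  - move=> x c Cc; apply: addr_ge0; [exact: G0 | exact: normr_ge0].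
  - move=> x c Cc h.
    have G0' := G0 x c Cc.
    have n0 := normr_ge0 (c ord0 ik - s' k x).
    have Gc : G x c <= 0 by lra.
    have nc : `|c ord0 ik - s' k x| <= 0 by lra.
    have [Fm hi] := Gz x c Cc Gc.
    split => // i; rewrite ltnS leq_eqVlt => /orP[/eqP ik'|ilt].
      have -> : i = ik by apply: val_inj.
      by move: nc; rewrite normr_le0 subr_eq0 => /eqP ->.
    rewrite hi // /s'; have : (val i == k) = false.
      by apply/negbTE; rewrite neq_ltn ilt.
    by move=> ->.
  - move=> x; exists (cx x); rewrite /s' eqxx subrr normr0 addr0.
    exact: (proj1 (svalP (hz x))).
have [s [G [ms _ _ _ [Gz Gne]]]] := step T (leqnn T).
pose fo x := \row_(i < T) s i x.
exists fo, m; split.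
- move=> i.
  have -> : (fun x => fo x ord0 i) = s i by apply: funext => x; rewrite mxE.
  exact: ms.
- exact: mmeas.
- move=> x; have [c [Cc Gc]] := Gne x; have [Fc hc] := Gz x c Cc Gc.
  have cfo : c = fo x by apply/rowP => i; rewrite mxE hc.
  rewrite -cfo; split => //; last exact: mm.
  by apply: le_anti; rewrite Fc mm.
Qed.
End SL.


Lemma finI_measurable d (X : measurableType d) (T : nat) (P : 'I_T -> set X) :
  (forall i, measurable (P i)) -> measurable [set x | forall i, P i x].
Proof.
move=> mP.
rewrite (_ : [set x | _] = \bigcap_(n : nat) [set x | forall i : 'I_T, val i = n -> P i x]).
  apply: bigcapT_measurable => n.
  case: (pselect (exists i : 'I_T, val i = n)) => [[i <-]|nex].
    rewrite (_ : [set x | _] = P i) //; apply/seteqP; split => x /=.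
      by apply.
    by move=> Pi j /val_inj ->.
  rewrite (_ : [set x | _] = setT) //; apply/seteqP; split => x //= _ j jn.
  by exfalso; apply: nex; exists j.
apply/seteqP; split => x /=.
  by move=> h n _ i _; exact: h.
by move=> h i; exact: (h (val i) I i erefl).
Qed.

Lemma BM d (X : measurableType d) {R : realType} (T : nat) (f : X -> 'rV[R]_T) :
  (forall i, measurable_fun setT (fun x => f x ord0 i)) -> borel_measurable f.
Proof.
move=> mf O oO.
pose box (p : 'rV[rat]_T * nat) := ball (map_mx (@ratr R) p.1 : 'rV[R]_T) (p.2.+1%:R^-1).
pose B n := if @unpickle ('rV[rat]_T * nat)%type n is Some p then
   (if pselect (box p `<=` O) is left _ then f @^-1` box p else set0) else set0.
rewrite (_ : f @^-1` O = \bigcup_n B n).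
  apply: bigcupT_measurable => n; rewrite /B.
  case: unpickle => [p|//]; case: pselect => // _.
  rewrite (_ : f @^-1` box p = [set x | forall i : 'I_T,
     `|(map_mx (@ratr R) p.1 : 'rV[R]_T) ord0 i - f x ord0 i| < p.2.+1%:R^-1]).
    apply: finI_measurable => i.
    have hm : measurable_fun setT (fun x => `|(map_mx (@ratr R) p.1 : 'rV[R]_T) ord0 i - f x ord0 i|).
      have h4 : measurable_fun setT (fun x => (map_mx (@ratr R) p.1 : 'rV[R]_T) ord0 i - f x ord0 i).
        by apply: measurable_funB; [exact: measurable_cst | exact: mf].
      have := measurableT_comp (@normr_measurable R setT) h4; exact.
    exact: mlt hm.
  apply/seteqP; split => x /=.
    by move=> [_ h] i; have := h ord0 i.
  move=> h; split; first by rewrite invr_gt0.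
  by move=> i j; rewrite (ord1 i); exact: h.
apply/seteqP; split => x /=.
  move=> Ox.
  have := open_nbhs_nbhs (conj oO Ox) => /(nbhs_ballP _ _) [e e0 he].
  have e20 : 0 < e / 2 by rewrite divr_gt0.
  have [k hk] := ltr_add_invr e20; rewrite add0r in hk.
  have k0 : 0 < k.+1%:R^-1 :> R by rewrite invr_gt0.
  have [q hq] := rat_approx (f x) _ k0.
  exists (pickle (q, k)) => //; rewrite /B pickleK.
  case: pselect => [_|]; first by rewrite /box /=; exact: ball_sym.
  case => y; rewrite /box /= => hy; apply: he.
  apply: (@le_ball _ _ _ (k.+1%:R^-1 + k.+1%:R^-1)).
    by rewrite [leRHS](splitr e) lerD // ltW.
  exact: (ball_triangle hq hy).
move=> [n _]; rewrite /B; case: unpickle => [p|//]; case: pselect => // hO.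
by move=> hx; exact: hO.
Qed.

Lemma MC d (X : measurableType d) {R : realType} (H : topologicalType)
  (g : X -> H) (phi : H -> R) :
  borel_measurable g -> continuous phi -> measurable_fun setT (phi \o g).
Proof.
move=> mg cphi.
apply: (measurability _ (measurable_realfun.RGenOpens.measurableE R)).
move=> _ [_ [a [b ->]] <-]; rewrite setTI comp_preimage.
apply: mg; move/continuousP: cphi; apply; by apply: interval_open.
Qed.

Lemma cont_sum (U : topologicalType) {R : realType} n (f : 'I_n -> U -> R) :
  (forall i, continuous (f i)) -> continuous (fun x => \sum_(i < n) f i x).
Proof.
elim: n f => [|n IH] f hf.
  under eq_fun do rewrite big_ord0; exact: cst_continuous.
under eq_fun do rewrite big_ord_recr /=.
move=> x.
have h1 := IH (fun i => f (widen_ord (leqnSn n) i)) (fun i => hf _) x.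
have := continuousD h1 (hf ord_max x); exact.
Qed.

Theorem lemma3 (R : realType) (X : ptopologicalType)
  (rho : probability (borel_type X) R)
  (a b : R) (T : nat) (C : set 'rV[R]_T)
  (H : completeNormedModType R) (ip : H -> H -> R) (ev : H -> R -> R)
  (psi : R -> H) (V : {linear H -> H}) (l : R -> R -> R)
  (g : 'I_T -> borel_type X -> H) :
  @polish R X ->
  a < b -> (1 <= T)%N ->
  C !=set0 -> compact C ->
  C `<=` [set c | forall t : 'I_T, c ord0 t \in `[a, b]] ->
  SELF `[a, b] l ip ev psi V ->
  {within [set p : R * R | p.1 \in `[a, b] /\ p.2 \in `[a, b]],
     continuous (fun p : R * R => l p.1 p.2)} ->
  (forall t, borel_measurable (g t)) ->
  (forall t, exists M : R, {ae rho, forall x, `|g t x| <= M}) ->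
  exists (fo : borel_type X -> 'rV[R]_T) (m : borel_type X -> R),
    [/\ borel_measurable fo /\
        (forall x, C (fo x) /\
           forall c, C c -> rfun ip psi V g x (fo x) <= rfun ip psi V g x c),
        measurable_fun setT m,
        {ae rho, forall x, (exists c, C c /\ m x = rfun ip psi V g x c) /\
                           forall c, C c -> m x <= rfun ip psi V g x c},
        Ebar rho ip psi V g fo = (\int[rho]_x (m x)%:E)%E &
        (\int[rho]_x (m x)%:E)%E =
          ereal_inf [set Ebar rho ip psi V g f | f in
            [set f : borel_type X -> 'rV[R]_T |
               (forall x, C (f x)) /\ borel_measurable f]]].
Proof.
move=> _ ab _ C0 cC Cbox [[hip _ _ _] psic Vc _] _ mg _.
have pc : continuous (psi \o clamp a b).
  apply: comp_within_cont psic (clamp_cont a b) _ => z.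
  exact: clamp_in (ltW ab).
pose Fm (x : borel_type X) (c : 'rV[R]_T) :=
  T%:R^-1 * \sum_(t < T) ip (psi (clamp a b (c ord0 t))) (V (g t x)).
have cF : forall x, continuous (Fm x).
  move=> x c.
  have hs : continuous (fun c : 'rV[R]_T =>
      \sum_(t < T) ip (psi (clamp a b (c ord0 t))) (V (g t x))).
    apply: cont_sum => t c'.
    apply: (@continuous_comp _ _ _ (fun c : 'rV[R]_T => c ord0 t)
              ((ip ^~ (V (g t x))) \o (psi \o clamp a b))).
      exact: coord_continuous.
    apply: continuous_comp; first exact: pc.
    exact: (@ip_contr R H ip hip).
  have := continuousM (@cst_continuous _ _ (T%:R^-1 : R) c) (hs c); exact.
have mF : forall c, measurable_fun setT (Fm ^~ c).
  move=> c.
  have hs : measurable_fun setT (fun x : borel_type X =>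
      \sum_(t < T) ip (psi (clamp a b (c ord0 t))) (V (g t x))).
    apply: measurable_sum => t.
    have cphi : continuous (fun h => ip (psi (clamp a b (c ord0 t))) (V h)).
      move=> h; apply: (@continuous_comp _ _ _ V (ip (psi (clamp a b (c ord0 t))))).
        exact: Vc.
      exact: (@ip_cont R H ip hip).
    have := @MC _ _ R H (g t) _ (mg t) cphi; exact.
  have := measurable_funM (@measurable_cst _ _ _ _ setT (T%:R^-1 : R)) hs; exact.
have [fo [m [mfo mm hfo]]] := @SL _ (borel_type X) R T C cC C0 Fm cF mF.
have rF x c : C c -> rfun ip psi V g x c = Fm x c.
  move=> Cc; rewrite /rfun /Fm; congr (_ * _); apply: eq_bigr => t _.
  by rewrite clamp_id //; exact: Cbox Cc t.
have bfo : borel_measurable fo by exact: BM mfo.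
have Efo : Ebar rho ip psi V g fo = (\int[rho]_x (m x)%:E)%E.
  rewrite /Ebar; apply: eq_integral => x _.
  by case: (hfo x) => Cf Ff _; rewrite rF // Ff.
exists fo, m; split => //.
- split => // x; case: (hfo x) => Cf Ff mmin; split => // c Cc.
  by rewrite !rF // Ff; exact: mmin.
- apply: aeW => x; case: (hfo x) => Cf Ff mmin; split.
    by exists (fo x); split => //; rewrite rF // Ff.
  by move=> c Cc; rewrite rF //; exact: mmin.
- apply/eqP; rewrite eq_le; apply/andP; split.
    apply/ereal_infP => _ [f [Cf mf] <-]; rewrite /Ebar; apply: le_integral_any => x.
    rewrite lee_fin; case: (hfo x) => _ _ h; rewrite rF //; exact: h.
  rewrite -Efo; set S := [set _ | _ in _].
  have hS : S (Ebar rho ip psi V g fo).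
    exists fo => //; split => //; by move=> x; case: (hfo x).
  exact: (ereal_inf_lbound hS).
Qed.
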